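(* Let $k$ be a countable infinite field. The two-sorted ultrametric space $(k(t^{\mathbb Q}),d,D)$ underlying the valued field $k(t^{\mathbb Q})$ is, after identifying $D$ with $\mathbb Q_{\ge0}$ via an order isomorphism, isometric to the countable rational Urysohn ultrametric space $\mathbb U$.
   Context: The Hahn field $k[[t^{\mathbb Q}]]$ consists of formal series $a=\sum_{q\in\mathbb Q}a_qt^q$, $a_q\in k$, with well-ordered support $\mathrm{supp}(a)=\{q:a_q\ne0\}$, with the usual addition and multiplication; $k[t^{\mathbb Q}]$ is its subring of elements with finite support, and $k(t^{\mathbb Q})$ is the field of fractions of $k[t^{\mathbb Q}]$ (inside $k[[t^{\mathbb Q}]]$). The valuation is $v(a)=\min\mathrm{supp}(a)$ ($v(0)=\infty$). The distance set $D=\{e^{-q}:q\in\mathbb Q\}\cup\{0\}$ is ordered as a subset of $\mathbb R$ (order-isomorphic to $\mathbb Q_{\ge0}$), and $d(a,b)=e^{-v(a-b)}$ with $e^{-\infty}=0$. $\mathbb U$ is the unique countable ultrametric space with distances in $\mathbb Q_{\ge0}$ universal for finite rational ultrametric spaces in which every isometry between finite subsets extends to a global isometry. *)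

(* Defs.v *)
From HB Require Import structures.
From mathcomp Require Import all_boot all_order all_algebra.
From mathcomp Require Import reals.
From mathcomp Require Import sequences.
Set Implicit Arguments. Unset Strict Implicit. Unset Printing Implicit Defensive.
Import Order.TTheory GRing.Theory Num.Theory.
Local Open Scope ring_scope.

Section Hahn.
Variable k : fieldType.

(* A finite formal sum  sum_i c_i t^{q_i}  represented by the list of (q_i, c_i). *)
Definition ser := seq (rat * k).

Definition coef (s : ser) (q : rat) : k := \sum_(pc <- s | pc.1 == q) pc.2.

Definition ser_nz (s : ser) : Prop := exists q, coef s q != 0.

Definition ser_sub (s1 s2 : ser) : ser := s1 ++ [seq (pc.1, - pc.2) | pc <- s2].

Definition ser_mul (s1 s2 : ser) : ser :=
  [seq (pc1.1 + pc2.1, pc1.2 * pc2.2) | pc1 <- s1, pc2 <- s2].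

(* support (possibly with repetitions) *)
Definition ser_supp (s : ser) : seq rat :=
  [seq q <- [seq pc.1 | pc <- s] | coef s q != 0].

(* valuation v = min supp, None standing for +oo *)
Definition ser_val (s : ser) : option rat :=
  match ser_supp s with
  | [::] => None
  | q :: r => Some (foldr Num.min q r)
  end.

Record frac := Frac { num : ser; den : ser }.

(* elements of k(t^Q): fractions f/g with g <> 0 (two representatives denote
   the same element iff f g' = f' g, i.e. iff their distance is 0) *)
Definition kTQ := {x : frac | ser_nz (den x)}.

Definition frac_sub (x y : frac) : frac :=
  Frac (ser_sub (ser_mul (num x) (den y)) (ser_mul (num y) (den x)))
       (ser_mul (den x) (den y)).

Definition frac_val (x : frac) : option rat :=
  match ser_val (num x), ser_val (den x) with
  | Some a, Some b => Some (a - b)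
  | _, _ => None
  end.

Definition kdist (R : realType) (a b : kTQ) : R :=
  match frac_val (frac_sub (sval a) (sval b)) with
  | Some q => expR (- ratr q)
  | None => 0
  end.
End Hahn.

Definition inD (R : realType) (x : R) : Prop :=
  x = 0 \/ exists q : rat, x = expR (- ratr q).

Definition order_iso_D (R : realType) (phi : R -> rat) : Prop :=
  [/\ (forall x y, inD x -> inD y -> (phi x <= phi y) = (x <= y)),
      (forall x, inD x -> 0 <= phi x) &
      (forall q : rat, 0 <= q -> exists2 x, inD x & phi x = q)].

Definition rat_ultrametric (T : Type) (d : T -> T -> rat) : Prop :=
  [/\ (forall x y, 0 <= d x y),
      (forall x y, d x y = 0 <-> x = y),
      (forall x y, d x y = d y x) &
      (forall x y z, d x z <= Num.max (d x y) (d y z))].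

Definition rat_universal (U : Type) (dU : U -> U -> rat) : Prop :=
  forall (n : nat) (m : 'I_n -> 'I_n -> rat), rat_ultrametric m ->
    exists e : 'I_n -> U, forall i j, dU (e i) (e j) = m i j.

Definition rat_ultrahomogeneous (U : eqType) (dU : U -> U -> rat) : Prop :=
  forall (A : seq U) (h : U -> U) (inA := fun x : U => x \in A),
    (forall x y, inA x -> inA y -> dU (h x) (h y) = dU x y) ->
    exists g : U -> U,
      [/\ bijective g, (forall x y, dU (g x) (g y) = dU x y) &
          (forall x, inA x -> g x = h x)].

Definition is_rational_Urysohn_ultrametric (U : countType) (dU : U -> U -> rat) : Prop :=
  [/\ rat_ultrametric dU, rat_universal dU & rat_ultrahomogeneous dU].

(* Main.v *)
Require Import Defs.
From HB Require Import structures.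
From mathcomp Require Import all_boot all_order all_algebra.
From mathcomp Require Import reals.
From mathcomp Require Import sequences.
From mathcomp Require Import exp.
From mathcomp Require Import lra.
From Stdlib Require Import Classical IndefiniteDescription ClassicalEpsilon ProofIrrelevance.
Import Order.TTheory GRing.Theory Num.Theory.
Local Open Scope ring_scope.
Set Implicit Arguments. Unset Strict Implicit.


Section Ser.
Variable k : fieldType.
Implicit Types s t u : ser k.

Lemma coef_cat s t q : coef (s ++ t) q = coef s q + coef t q.
Proof. by rewrite /coef big_cat. Qed.

Lemma coef_sub s t q : coef (ser_sub s t) q = coef s q - coef t q.
Proof.
rewrite /ser_sub coef_cat /coef big_map /= -sumrN; done.
Qed.

Lemma coef_notin s q : q \notin map fst s -> coef s q = 0.
Proof.
move=> H; rewrite /coef big_seq_cond big1 // => pc /andP[Hin /eqP E].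
by move: H; rewrite -E; move/negP; case; apply/mapP; exists pc.
Qed.

Lemma group_sum s (G : rat -> k) :
  \sum_(pc <- s) pc.2 * G pc.1 = \sum_(p <- undup (map fst s)) coef s p * G p.
Proof.
have -> : \sum_(p <- undup (map fst s)) coef s p * G p =
   \sum_(p <- undup (map fst s)) \sum_(pc <- s) (if pc.1 == p then pc.2 * G pc.1 else 0).
  apply: eq_bigr => p _; rewrite /coef big_distrl /= -big_mkcond /=.
  by apply: eq_bigr => pc /eqP ->.
rewrite exchange_big /= [LHS]big_seq [RHS]big_seq; apply: eq_bigr => pc Hs.
rewrite -big_mkcond /=.
have Hin : pc.1 \in undup (map fst s) by rewrite mem_undup; apply/mapP; exists pc.
rewrite -big_filter.
have -> : [seq i <- undup [seq pc.1 | pc <- s] | pc.1 == i] = [:: pc.1].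
  rewrite (eq_filter (a2 := pred1 pc.1)); last by move=> x /=; rewrite eq_sym.
  by rewrite filter_pred1_uniq ?undup_uniq.
by rewrite big_seq1.
Qed.

Lemma coef_mul s t q : coef (ser_mul s t) q = \sum_(x <- s) x.2 * coef t (q - x.1).
Proof.
elim: s => [|x s IH]; first by rewrite big_nil /coef big_nil.
rewrite big_cons -IH /ser_mul /= coef_cat; congr (_ + _).
rewrite /coef big_map big_distrr /= big_mkcond [RHS]big_mkcond /=.
apply: eq_bigr => y _.
have -> : (x.1 + y.1 == q) = (y.1 == q - x.1).
  apply/eqP/eqP => [<-|->]; first by rewrite addrC addKr.
  by rewrite addrC subrK.
by case: ifP => // _; rewrite mulr0.
Qed.

Lemma coef_mul_lb s t a b : (forall p, p < a -> coef s p = 0) ->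
  (forall p, p < b -> coef t p = 0) ->
  forall p, p < a + b -> coef (ser_mul s t) p = 0.
Proof.
move=> Hs Ht p Hp; rewrite coef_mul (group_sum s (fun r => coef t (p - r))) big1 // => r _.
case: (ltP r a) => Hr; first by rewrite Hs // mul0r.
rewrite Ht ?mulr0 //; rewrite ltrBlDr addrC (lt_le_trans Hp) //.
by rewrite lerD2r.
Qed.

Lemma single_sum (Q : seq rat) (F : rat -> k) a : uniq Q ->
  (forall q, q \in Q -> q != a -> F q = 0) ->
  \sum_(q <- Q) F q = if a \in Q then F a else 0.
Proof.
move=> U H; case: ifP => Ha.
  rewrite (bigD1_seq a) //= big_seq_cond big1 ?addr0 //.
  by move=> q /andP[Hq Hqa]; exact: H.
rewrite big_seq big1 // => q Hq; apply: (H q Hq); apply/negP => /eqP E.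
by rewrite -E Hq in Ha.
Qed.

Lemma coef_mul_lead s t a b : (forall p, p < a -> coef s p = 0) ->
  (forall p, p < b -> coef t p = 0) ->
  coef (ser_mul s t) (a + b) = coef s a * coef t b.
Proof.
move=> Hs Ht; rewrite coef_mul (group_sum s (fun r => coef t (a + b - r))) (@single_sum _ _ a) ?undup_uniq //.
  case: ifP; first by rewrite addrAC subrr add0r.
  by move=> /negbT; rewrite mem_undup => /coef_notin ->; rewrite mul0r.
move=> r _ Hra; case: (ltP r a) => Hr; first by rewrite Hs // mul0r.
rewrite Ht ?mulr0 //.
have Hlt : a < r by rewrite lt_neqAle Hr eq_sym Hra.
by rewrite ltrBlDr [a + b]addrC ltrD2l.
Qed.

Lemma foldr_min_spec (r : seq rat) q0 :
  foldr Num.min q0 r \in q0 :: r /\ (forall x, x \in q0 :: r -> foldr Num.min q0 r <= x).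
Proof.
elim: r => [|y r [IH1 IH2]] /=.
  by split; [rewrite mem_seq1|move=> x; rewrite mem_seq1 => /eqP ->].
split.
  case: (leP y (foldr Num.min q0 r)) => H.
    by rewrite !inE eqxx orbT.
  move: IH1; rewrite !inE => /orP[->|->]; by rewrite ?orbT.
move=> x; rewrite !inE => /orP[/eqP->|/orP[/eqP->|Hx]]; rewrite ge_min.
- by rewrite IH2 ?inE ?eqxx ?orbT.
- by rewrite lexx.
- by rewrite IH2 ?inE ?Hx ?orbT.
Qed.

Lemma coef_supp s q : coef s q != 0 -> q \in ser_supp s.
Proof.
move=> H; rewrite /ser_supp mem_filter H /=; apply/negPn/negP => Hn.
by move: H; rewrite coef_notin ?eqxx.
Qed.

Lemma val_None s : ser_val s = None -> forall q, coef s q = 0.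
Proof.
rewrite /ser_val; case E: (ser_supp s) => [|? ?] // _ q.
apply/eqP/negP => /negP /coef_supp; by rewrite E.
Qed.

Lemma val_Some s m : ser_val s = Some m ->
  coef s m != 0 /\ (forall q, q < m -> coef s q = 0).
Proof.
rewrite /ser_val; case E: (ser_supp s) => [|q0 r] // [<-].
have [H1 H2] := foldr_min_spec r q0.
split.
  by move: H1; rewrite -E /ser_supp mem_filter => /andP[].
move=> q Hq; apply/eqP/negP => /negP /coef_supp; rewrite E => /H2 Hle.
by move: (lt_le_trans Hq Hle); rewrite ltxx.
Qed.

Lemma val_eq s m : coef s m != 0 -> (forall q, q < m -> coef s q = 0) ->
  ser_val s = Some m.
Proof.
move=> H1 H2; case E: (ser_val s) => [m'|].
  have [H1' H2'] := val_Some E; congr Some.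
  case: (ltgtP m' m) => // Hc.
    by move: H1'; rewrite H2 ?eqxx.
  by move: H1; rewrite H2' ?eqxx.
by move: H1; rewrite (val_None E) eqxx.
Qed.

Lemma val_None' s : (forall q, coef s q = 0) -> ser_val s = None.
Proof.
move=> H; case E: (ser_val s) => [m|] //.
by have [] := val_Some E; rewrite H eqxx.
Qed.

Lemma val_coef s t : (forall q, coef s q = coef t q) -> ser_val s = ser_val t.
Proof.
move=> H; case E: (ser_val t) => [m|].
  have [H1 H2] := val_Some E; apply: val_eq; first by rewrite H.
  by move=> q Hq; rewrite H H2.
by apply: val_None' => q; rewrite H (val_None E).
Qed.

Lemma coef_mulDS s t q : coef (ser_mul s t) q =
  \sum_(x <- s) \sum_(y <- t) (if x.1 + y.1 == q then x.2 * y.2 else 0).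
Proof.
rewrite coef_mul; apply: eq_bigr => x _; rewrite /coef big_distrr /= big_mkcond /=.
apply: eq_bigr => y _.
have -> : (x.1 + y.1 == q) = (y.1 == q - x.1).
  apply/eqP/eqP => [<-|->]; first by rewrite addrC addKr.
  by rewrite addrC subrK.
by case: ifP => // _; rewrite mulr0.
Qed.

Lemma coef_mulC s t q : coef (ser_mul s t) q = coef (ser_mul t s) q.
Proof.
rewrite !coef_mulDS exchange_big /=; apply: eq_bigr => y _; apply: eq_bigr => x _.
by rewrite addrC mulrC.
Qed.

Definition TS s t u q := \sum_(x <- s) \sum_(y <- t) \sum_(z <- u)
  (if x.1 + y.1 + z.1 == q then x.2 * y.2 * z.2 else 0).

Lemma coef_mul3 s t u q : coef (ser_mul (ser_mul s t) u) q = TS s t u q.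
Proof.
rewrite coef_mulC coef_mul /TS.
under eq_bigr => z _ do rewrite coef_mulDS big_distrr /=.
rewrite exchange_big /=; apply: eq_bigr => x _.
under eq_bigr => z _ do rewrite big_distrr /=.
rewrite exchange_big /=; apply: eq_bigr => y _.
apply: eq_bigr => z _.
have -> : (x.1 + y.1 + z.1 == q) = (x.1 + y.1 == q - z.1).
  apply/eqP/eqP => [<-|->]; first by rewrite addrK.
  by rewrite subrK.
by case: ifP => _; rewrite ?mulr0 // mulrC.
Qed.

Lemma TS_C1 s t u q : TS s t u q = TS t s u q.
Proof.
rewrite /TS exchange_big /=; apply: eq_bigr => y _; apply: eq_bigr => x _.
by apply: eq_bigr => z _; rewrite [x.1 + y.1]addrC [x.2 * y.2]mulrC.
Qed.

Lemma TS_C2 s t u q : TS s t u q = TS s u t q.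
Proof.
rewrite /TS; apply: eq_bigr => x _; rewrite exchange_big /=.
apply: eq_bigr => z _; apply: eq_bigr => y _.
by rewrite -!addrA [y.1 + z.1]addrC -!mulrA [y.2 * z.2]mulrC.
Qed.

Lemma coef_mul_subl s t u q :
  coef (ser_mul (ser_sub s t) u) q = coef (ser_mul s u) q - coef (ser_mul t u) q.
Proof.
rewrite !coef_mul /ser_sub big_cat big_map /= -sumrN; congr (_ + _).
by apply: eq_bigr => x _; rewrite mulNr.
Qed.

Lemma coef_mul_catl s t u q :
  coef (ser_mul (s ++ t) u) q = coef (ser_mul s u) q + coef (ser_mul t u) q.
Proof. by rewrite !coef_mul big_cat. Qed.

Lemma coef_mul1 (a : rat) (c : k) t q :
  coef (ser_mul [:: (a, c)] t) q = c * coef t (q - a).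
Proof. by rewrite coef_mul big_seq1. Qed.

End Ser.


Definition psi (s : rat) : rat := if 0 <= s then s + 1 else (1 - s)^-1.

Lemma psi_gt0 s : 0 < psi s.
Proof.
rewrite /psi; case: ifP => H; first by rewrite (le_lt_trans H) // ltrDl.
rewrite invr_gt0 subr_gt0; move/negbT: H; rewrite -ltNge => H.
by rewrite (lt_trans H) ?ltr01.
Qed.

Lemma psi_homo : {homo psi : x y / x < y}.
Proof.
move=> x y Hxy; rewrite /psi.
case: (leP 0 x) => Hx.
  by rewrite (le_trans Hx (ltW Hxy)) ltrD2r.
case: (leP 0 y) => Hy.
  apply: (@lt_le_trans _ _ 1); last by rewrite lerDr.
  by rewrite invf_lt1 ?subr_gt0 ?(lt_trans Hx) ?ltr01 // ltrDl oppr_gt0.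
rewrite ltf_pV2 ?posrE ?subr_gt0 ?(lt_trans Hx) ?(lt_trans Hy) ?ltr01 //.
by rewrite ltrD2l ltrN2.
Qed.

Lemma psi_mono : {mono psi : x y / x <= y}.
Proof. exact: le_mono psi_homo. Qed.

Lemma psi_lt : {mono psi : x y / x < y}.
Proof. exact: leW_mono psi_mono. Qed.

Lemma psi_surj r : 0 < r -> exists s, psi s = r.
Proof.
move=> Hr; case: (leP 1 r) => H.
  exists (r - 1); rewrite /psi subr_ge0 H; by rewrite subrK.
exists (1 - r^-1); rewrite /psi.
have Hi : 1 < r^-1 by rewrite invf_gt1.
rewrite subr_ge0 leNgt Hi /= opprB addrCA subrr addr0 invrK //.
Qed.

Section Frac.
Variable k : fieldType.
Implicit Types s t u : ser k.
Implicit Types a b : kTQ k.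

Definition nu a := num (sval a).
Definition de a := den (sval a).

Lemma val_coef0 s t : (forall q, (coef s q == 0) = (coef t q == 0)) ->
  ser_val s = ser_val t.
Proof.
move=> H; case E: (ser_val t) => [m|].
  have [H1 H2] := val_Some E; apply: val_eq; first by rewrite H.
  by move=> q Hq; apply/eqP; rewrite H H2.
by apply: val_None' => q; apply/eqP; rewrite H (val_None E).
Qed.

Lemma de_val a : exists e, ser_val (de a) = Some e.
Proof.
case E: (ser_val (de a)) => [e|]; first by exists e.
have [q Hq] := svalP a; by move: Hq; rewrite (val_None E) eqxx.
Qed.

Lemma mul_val s t es et : ser_val s = Some es -> ser_val t = Some et ->
  ser_val (ser_mul s t) = Some (es + et).
Proof.
move=> Hs Ht; have [Hs1 Hs2] := val_Some Hs; have [Ht1 Ht2] := val_Some Ht.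
apply: val_eq; first by rewrite (coef_mul_lead Hs2 Ht2) mulf_neq0.
exact: coef_mul_lb Hs2 Ht2.
Qed.

Lemma zero_mul s t : ser_val s = None -> forall p, coef (ser_mul s t) p = 0.
Proof.
move=> Hs p; rewrite coef_mulC coef_mul big1 // => y _.
by rewrite (val_None Hs) mulr0.
Qed.

Lemma lb_mul s t x e p : ser_val s = Some x -> ser_val t = Some e ->
  coef (ser_mul s t) p != 0 -> x + e <= p.
Proof.
move=> Hs Ht H; rewrite leNgt; apply/negP => Hp.
have [_ Hs2] := val_Some Hs; have [_ Ht2] := val_Some Ht.
by move: H; rewrite (coef_mul_lb Hs2 Ht2 Hp) eqxx.
Qed.

Definition Nm a b := num (frac_sub (sval a) (sval b)).

Lemma NmE a b : Nm a b = ser_sub (ser_mul (nu a) (de b)) (ser_mul (nu b) (de a)).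
Proof. by []. Qed.

Definition delta a b : rat :=
  match frac_val (frac_sub (sval a) (sval b)) with
  | Some q => psi (- q) | None => 0 end.

Lemma delta_spec a b ea eb : ser_val (de a) = Some ea -> ser_val (de b) = Some eb ->
  delta a b = match ser_val (Nm a b) with Some s => psi (ea + eb - s) | None => 0 end.
Proof.
move=> Ha Hb; rewrite /delta /frac_val.
have -> : ser_val (den (frac_sub (sval a) (sval b))) = Some (ea + eb) by exact: mul_val.
rewrite -/(Nm a b); case: (ser_val (Nm a b)) => // s.
by rewrite opprB.
Qed.

Lemma delta_ge0 a b : 0 <= delta a b.
Proof. rewrite /delta; case: frac_val => // q; exact: ltW (psi_gt0 _). Qed.

Lemma delta_aa a : delta a a = 0.
Proof.
have [e He] := de_val a; rewrite (delta_spec He He) val_None' // => q.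
by rewrite NmE coef_sub subrr.
Qed.

Lemma delta_sym a b : delta a b = delta b a.
Proof.
have [ea Ha] := de_val a; have [eb Hb] := de_val b.
rewrite (delta_spec Ha Hb) (delta_spec Hb Ha) [eb + ea]addrC.
rewrite (@val_coef0 (Nm a b) (Nm b a)) // => q.
by rewrite !NmE !coef_sub -oppr_eq0 opprB.
Qed.

Lemma delta_ultra (a b c : kTQ k) : delta a c <= Num.max (delta a b) (delta b c).
Proof.
have [ea Ha] := de_val a; have [eb Hb] := de_val b; have [ec Hc] := de_val c.
have Hid : forall p, coef (ser_mul (Nm a c) (de b)) p =
   coef (ser_mul (Nm a b) (de c)) p + coef (ser_mul (Nm b c) (de a)) p.
  move=> p; rewrite !NmE !coef_mul_subl !coef_mul3.
  rewrite [TS (nu a) (de c) (de b) p]TS_C2 [TS (nu b) (de a) (de c) p]TS_C2.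
  rewrite [TS (nu c) (de a) (de b) p]TS_C2.
  by rewrite addrA subrK.
rewrite (delta_spec Ha Hc).
case Ez: (ser_val (Nm a c)) => [z|]; last by rewrite le_max !delta_ge0.
have [Hz1 Hz2] := val_Some Ez; have [Hb1 Hb2] := val_Some Hb.
have Hl := coef_mul_lead Hz2 Hb2.
have : coef (ser_mul (Nm a c) (de b)) (z + eb) != 0 by rewrite Hl mulf_neq0.
rewrite Hid.
case Ex: (ser_val (Nm a b)) => [x|]; last first.
  rewrite zero_mul // add0r.
  case Ey: (ser_val (Nm b c)) => [y|]; last by rewrite zero_mul ?eqxx.
  move=> /(lb_mul Ey Ha) Hy.
  rewrite le_max (delta_spec Hb Hc) Ey psi_mono; apply/orP; right.
  lra.
have HYcase : coef (ser_mul (Nm b c) (de a)) (z + eb) != 0 -> 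
   psi (ea + ec - z) <= Num.max (delta a b) (delta b c).
  case Ey: (ser_val (Nm b c)) => [y|]; last by rewrite zero_mul ?eqxx.
  move=> /(lb_mul Ey Ha) Hy.
  rewrite le_max (delta_spec Hb Hc) Ey psi_mono; apply/orP; right.
  lra.
case: (eqVneq (coef (ser_mul (Nm a b) (de c)) (z + eb)) 0) => HX.
  by rewrite HX add0r; exact: HYcase.
move=> _; move: HX => /(lb_mul Ex Hc) Hx.
rewrite le_max (delta_spec Ha Hb) Ex psi_mono; apply/orP; left.
lra.
Qed.

Lemma coef_mul_mono (q : rat) (c : k) s t p :
  coef (ser_mul (ser_mul [:: (q, c)] s) t) p = c * coef (ser_mul s t) (p - q).
Proof.
rewrite coef_mul3 /TS big_seq1 coef_mulDS big_distrr /=; apply: eq_bigr => y _.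
rewrite big_distrr /=; apply: eq_bigr => z _.
have -> : (q + y.1 + z.1 == p) = (y.1 + z.1 == p - q).
  by apply/eqP/eqP => H; lra.
by case: ifP; rewrite ?mulr0 // mulrA.
Qed.

Definition ext (a0 : kTQ k) (q : rat) (c : k) : kTQ k :=
  exist _ (Frac (nu a0 ++ ser_mul [:: (q, c)] (de a0)) (de a0)) (svalP a0).

Lemma Nm_ext a0 q c b p : coef (Nm (ext a0 q c) b) p =
  coef (Nm a0 b) p + c * coef (ser_mul (de a0) (de b)) (p - q).
Proof.
rewrite !NmE !coef_sub /nu /de /= coef_mul_catl coef_mul_mono -/(nu a0) -/(de a0).
by rewrite addrAC.
Qed.

Lemma In_map (T : Type) (U : eqType) (f : T -> U) x l : List.In x l -> f x \in map f l.
Proof.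
elim: l => //= y l IH [->|H]; first by rewrite inE eqxx.
by rewrite inE IH ?orbT.
Qed.

Lemma back_step (kinf : forall s : seq k, exists x : k, x \notin s)
  (a0 : kTQ k) (q : rat) (bs : seq (kTQ k)) : exists a, forall b, List.In b bs ->
  (psi (- q) < delta a0 b -> delta a b = delta a0 b) /\
  (delta a0 b <= psi (- q) -> delta a b = psi (- q)).
Proof.
pose e b := odflt 0 (ser_val (ser_mul (de a0) (de b))).
pose beta b := - coef (Nm a0 b) (q + e b) / coef (ser_mul (de a0) (de b)) (e b).
have [c Hc] := kinf (map beta bs).
exists (ext a0 q c) => b Hb.
have Hcb : c != beta b by apply/eqP => E; move: Hc; rewrite E In_map.
have [ea Ha] := de_val a0; have [eb Hbv] := de_val b.
have HD := mul_val Ha Hbv.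
have [HD1 HD2] := val_Some HD.
have He : e b = ea + eb by rewrite /e HD.
have Hea : ser_val (de (ext a0 q c)) = Some ea by [].
rewrite (delta_spec Hea Hbv) (delta_spec Ha Hbv).
have HqE : (forall p, p < q + (ea + eb) -> coef (Nm a0 b) p = 0) ->
    ser_val (Nm (ext a0 q c) b) = Some (q + (ea + eb)).
  move=> HW; apply: val_eq.
    rewrite Nm_ext [_ - q]addrC addKr.
    apply/negP => /eqP H; move/eqP: Hcb; apply.
    rewrite /beta He; apply: (mulIf HD1); rewrite mulfVK //.
    by apply/eqP; rewrite -addr_eq0 addrC; apply/eqP.
  move=> p Hp; rewrite Nm_ext HW // HD2 ?mulr0 ?addr0 //.
  by rewrite ltrBlDl.
case EW: (ser_val (Nm a0 b)) => [s0|]; last first.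
  rewrite HqE; last by move=> p _; rewrite (val_None EW).
  split; first by move/(lt_trans (psi_gt0 (- q))); rewrite ltxx.
  by move=> _; congr psi; lra.
have [HW1 HW2] := val_Some EW.
split.
  rewrite psi_lt => Hlt.
  suff -> : ser_val (Nm (ext a0 q c) b) = Some s0 by [].
  apply: val_eq.
    by rewrite Nm_ext HD2 ?mulr0 ?addr0 //; lra.
  move=> p Hp; rewrite Nm_ext HW2 // HD2 ?mulr0 ?addr0 //; lra.
rewrite psi_mono => Hle.
rewrite HqE; first by congr psi; lra.
move=> p Hp; apply: HW2; lra.
Qed.

End Frac.


Section BF.
Variables (X Y : Type) (dX : X -> X -> rat) (dY : Y -> Y -> rat).
Hypothesis dY0 : forall x y, dY x y = 0 -> x = y.
Hypothesis dYxx : forall x, dY x x = 0.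
Hypothesis dXxx : forall x, dX x x = 0.
Hypothesis dYs : forall x y, dY x y = dY y x.
Hypothesis dXs : forall x y, dX x y = dX y x.
Variables (eX : nat -> X) (eY : nat -> Y).
Hypothesis eXs : forall x, exists n, eX n = x.
Hypothesis eYs : forall y, exists n, eY n = y.

Definition iso (L : seq (X * Y)) := forall p p', List.In p L -> List.In p' L ->
  dY p.2 p'.2 = dX p.1 p'.1.

Hypothesis forth : forall L, iso L -> forall x, exists y,
  forall p, List.In p L -> dY y p.2 = dX x p.1.
Hypothesis back : forall L, iso L -> forall y, exists x,
  forall p, List.In p L -> dX x p.1 = dY y p.2.

Lemma forth' L x : exists y, iso L -> forall p, List.In p L -> dY y p.2 = dX x p.1.
Proof.
case: (classic (iso L)) => H.
  by have [y Hy] := forth H x; exists y.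
by exists (eY 0).
Qed.

Lemma back' L y : exists x, iso L -> forall p, List.In p L -> dX x p.1 = dY y p.2.
Proof.
case: (classic (iso L)) => H.
  by have [x Hx] := back H y; exists x.
by exists (eX 0).
Qed.

Definition fo L x := proj1_sig (constructive_indefinite_description _ (forth' L x)).
Definition bk L y := proj1_sig (constructive_indefinite_description _ (back' L y)).

Lemma foP L x : iso L -> forall p, List.In p L -> dY (fo L x) p.2 = dX x p.1.
Proof. exact: (proj2_sig (constructive_indefinite_description _ (forth' L x))). Qed.
Lemma bkP L y : iso L -> forall p, List.In p L -> dX (bk L y) p.1 = dY y p.2.
Proof. exact: (proj2_sig (constructive_indefinite_description _ (back' L y))). Qed.

Definition st n L : X * Y :=
  if odd n then (bk L (eY n./2), eY n./2) else (eX n./2, fo L (eX n./2)).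

Fixpoint Ls n : seq (X * Y) := if n is n'.+1 then Ls n' ++ [:: st n' (Ls n')] else [::].

Lemma iso_cat L p : iso L -> (forall p', List.In p' L -> dY p.2 p'.2 = dX p.1 p'.1) ->
  dY p.2 p.2 = dX p.1 p.1 -> iso (L ++ [:: p]).
Proof.
move=> HL Hp Hpp q q'; rewrite !List.in_app_iff /= => [[Hq|[<-|[]]] [Hq'|[<-|[]]]].
- exact: HL.
- by rewrite dYs dXs Hp.
- exact: Hp.
- exact: Hpp.
Qed.

Lemma iso_Ls n : iso (Ls n).
Proof.
elim: n => [|n IH] /=; first by move=> p p' [].
apply: iso_cat => //; last by rewrite dYxx dXxx.
rewrite /st; case: ifP => _ /= p' Hp'.
  by rewrite (bkP (eY n./2) IH Hp').
exact: (foP (eX n./2) IH Hp').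
Qed.

Lemma Ls_mono m n p : (m <= n)%N -> List.In p (Ls m) -> List.In p (Ls n).
Proof.
move=> /subnK <-; elim: (n - m)%N => [|d IH] // H.
by rewrite addSn /= List.in_app_iff; left; apply: IH.
Qed.

Definition idx x := proj1_sig (constructive_indefinite_description _ (eXs x)).
Lemma idxP x : eX (idx x) = x.
Proof. exact: (proj2_sig (constructive_indefinite_description _ (eXs x))). Qed.

Definition F x := fo (Ls (2 * idx x)) x.

Lemma F_in x : List.In (x, F x) (Ls (2 * idx x).+1).
Proof.
rewrite /= List.in_app_iff; right; left.
by rewrite /st /F mul2n odd_double half_double idxP.
Qed.

Lemma BF : exists F : X -> Y, (forall a b, dY (F a) (F b) = dX a b) /\
  (forall y, exists x, F x = y).
Proof.
exists F; split.
  move=> a b; set N := maxn (2 * idx a).+1 (2 * idx b).+1.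
  have Ha := Ls_mono (leq_maxl _ _ : ((2 * idx a).+1 <= N)%N) (F_in a).
  have Hb := Ls_mono (leq_maxr _ _ : ((2 * idx b).+1 <= N)%N) (F_in b).
  exact: (iso_Ls Ha Hb).
move=> y; have [n <-] := eYs y.
set x := bk (Ls (2 * n).+1) (eY n).
have Hin : List.In (x, eY n) (Ls (2 * n).+2).
  rewrite [Ls _.+2]/= List.in_app_iff; right; left.
  rewrite /x /st mul2n /= !odd_double /= uphalf_double.
  by rewrite /st odd_double.
exists x; apply: dY0.
set N := maxn (2 * idx x).+1 (2 * n).+2.
have Ha := Ls_mono (leq_maxl _ _ : ((2 * idx x).+1 <= N)%N) (F_in x).
have Hb := Ls_mono (leq_maxr _ _ : ((2 * n).+2 <= N)%N) Hin.
by rewrite (iso_Ls Ha Hb) dXxx.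
Qed.

End BF.


Section Forth.
Variables (X : Type) (dX : X -> X -> rat).
Hypothesis dXxx : forall x, dX x x = 0.
Hypothesis dXs : forall x y, dX x y = dX y x.
Hypothesis dXge0 : forall x y, 0 <= dX x y.
Hypothesis dXu : forall x y z, dX x z <= Num.max (dX x y) (dX y z).

Lemma pseudo_eq x z w : dX z w = 0 -> dX x z = dX x w.
Proof.
move=> H; apply/eqP; rewrite eq_le; apply/andP; split.
  by have := dXu x w z; rewrite [dX w z]dXs H (max_idPl (dXge0 _ _)).
by have := dXu x z w; rewrite H (max_idPl (dXge0 _ _)).
Qed.

Variables (U : countType) (dU : U -> U -> rat).
Hypothesis hU : is_rational_Urysohn_ultrametric dU.
Variable u0 : U.

Lemma nth_In (T : Type) (d : T) (L : seq T) i : (i < size L)%N -> List.In (nth d L i) L.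
Proof.
elim: L i => [|a L IH] [|i] //= H; first by left.
by right; apply: IH.
Qed.

Lemma In_snd (L : seq (X * U)) p : List.In p L -> p.2 \in map snd L.
Proof.
elim: L => //= q L IH [->|H]; first by rewrite inE eqxx.
by rewrite inE IH ?orbT.
Qed.

Lemma U_forth (L : seq (X * U)) : iso dX dU L -> forall x, exists u,
  forall p, List.In p L -> dU u p.2 = dX x p.1.
Proof.
move=> HL x.
have [[Um Um0 Ums Umu] Uuniv Uhom] := hU.
case: (classic (exists p, List.In p L /\ dX x p.1 = 0)) => [[p [Hp Hp0]]|Hno].
  exists p.2 => p' Hp'; rewrite (HL _ _ Hp Hp').
  by rewrite [LHS]dXs [RHS]dXs (pseudo_eq p'.1 Hp0).
pose rep y := (nth (x, y) L (index y (map snd L))).1.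
have rep_in : forall y, y \in map snd L -> List.In (rep y, y) L.
  move=> y Hy.
  have Hi : (index y (map snd L) < size L)%N by rewrite -(size_map snd) index_mem.
  have := nth_In (x, y) Hi.
  suff -> : (rep y, y) = nth (x, y) L (index y (map snd L)) by [].
  rewrite /rep; case E: (nth (x, y) L _) => [a b] /=; congr pair.
  by rewrite -[b]/((a, b).2) -E -(nth_map (x, y) y snd Hi) nth_index.
pose A := undup (map snd L); pose n := size A.
pose pt := fun i : 'I_n.+1 => if (i < n)%N then rep (nth u0 A i) else x.
pose m := fun i j : 'I_n.+1 => dX (pt i) (pt j).
have ptA : forall i, (i < n)%N -> List.In (pt (inord i), nth u0 A i) L.
  move=> i Hi; rewrite /pt inordK ?Hi ?(ltn_trans Hi) //; apply: rep_in.
  by rewrite -mem_undup mem_nth.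
have ptn : pt ord_max = x by rewrite /pt /= ltnn.
have Hm : rat_ultrametric m.
  split; rewrite /m.
  - by move=> i j; apply: dXge0.
  - move=> i j; split; last by move=> ->; apply: dXxx.
    have Hlt : forall i : 'I_n.+1, (i < n)%N -> pt i = pt (inord i).
      by move=> i0 Hi0; rewrite inord_val.
    have Hge : forall i : 'I_n.+1, (n <= i)%N -> i = ord_max.
      move=> i0 Hi0; apply: val_inj => /=.
      by apply/eqP; rewrite eqn_leq Hi0 -ltnS ltn_ord.
    case: (ltnP i n) => Hi; case: (ltnP j n) => Hj.
    + rewrite (Hlt i Hi) (Hlt j Hj).
      rewrite -(HL _ _ (ptA _ Hi) (ptA _ Hj)) /= => /Um0 H0.
      apply: val_inj; apply/eqP; rewrite -(nth_uniq u0 Hi Hj (undup_uniq _)).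
      by apply/eqP.
    + rewrite (Hlt i Hi) (Hge j Hj) ptn => H0; exfalso; apply: Hno.
      by exists (pt (inord i), nth u0 A i); split; [exact: ptA|rewrite dXs].
    + rewrite (Hlt j Hj) (Hge i Hi) ptn => H0; exfalso; apply: Hno.
      by exists (pt (inord j), nth u0 A j); split; [exact: ptA|].
    + by rewrite (Hge i Hi) (Hge j Hj).
  - by move=> i j; apply: dXs.
  - by move=> i j l; apply: dXu.
have [e He] := Uuniv _ m Hm.
have einj : forall i j, e i = e j -> i = j.
  move=> i j Eij; have [_ H0 _ _] := Hm; apply/H0; by rewrite -He Eij Um0.
pose A' := [seq e (inord i) | i <- iota 0 n].
have HA'u : uniq A'.
  rewrite map_inj_in_uniq ?iota_uniq // => i j; rewrite !mem_iota !add0n => /andP[_ Hi] /andP[_ Hj].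
  move/einj => /(congr1 val); rewrite /= !inordK // ?(ltn_trans Hi) ?(ltn_trans Hj) //.
have Hidx : forall i, (i < n)%N -> index (e (inord i)) A' = i.
  move=> i Hi; have Hs : (i < size A')%N by rewrite size_map size_iota.
  have := index_uniq u0 Hs HA'u.
  by rewrite (nth_map 0%N) ?size_iota // nth_iota.
pose h := fun y => nth u0 A (index y A').
have Hh : forall y y', y \in A' -> y' \in A' -> dU (h y) (h y') = dU y y'.
  move=> y y' /mapP[i Hi ->] /mapP[j Hj ->].
  move: Hi Hj; rewrite !mem_iota !add0n => /andP[_ Hi] /andP[_ Hj].
  rewrite /h !Hidx // He /m.
  exact: (HL _ _ (ptA _ Hi) (ptA _ Hj)).
have [g [_ Hg1 Hg2]] := Uhom A' h Hh.
exists (g (e ord_max)) => p Hp.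
have HpA : p.2 \in A by rewrite mem_undup In_snd.
set i := index p.2 A.
have Hi : (i < n)%N by rewrite index_mem.
have HAi : nth u0 A i = p.2 by rewrite nth_index.
have Hin : e (inord i) \in A' by apply: map_f; rewrite mem_iota add0n.
rewrite -HAi -{1}(Hidx _ Hi) -/(h _) -(Hg2 _ Hin) Hg1 He /m ptn.
have := ptA _ Hi; rewrite HAi => Hq.
apply: pseudo_eq.
by rewrite -(HL _ _ Hq Hp) /= Um0.
Qed.

End Forth.


Section Phi.
Variable R : realType.

Definition qof (x : R) : rat :=
  epsilon (inhabits 0) (fun q : rat => x = expR (- ratr q)).

Definition phi (x : R) : rat := if x == 0 then 0 else psi (- qof x).

Lemma ratr_inj' (q q' : rat) : (ratr q : R) = ratr q' -> q = q'.
Proof.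
move=> H; apply/eqP; rewrite eq_le -(ler_rat R) -(ler_rat R q') H lexx //.
Qed.

Lemma phi_exp q : phi (expR (- ratr q)) = psi (- q).
Proof.
rewrite /phi gt_eqF ?expR_gt0 //.
have := epsilon_spec (inhabits 0) (fun q' : rat => expR (- ratr q) = expR (- ratr q' : R))
  (ex_intro _ q erefl).
rewrite -/(qof _) => /expR_inj /eqP; rewrite eqr_opp => /eqP /ratr_inj' <- //.
Qed.

Lemma phi0 : phi 0 = 0.
Proof. by rewrite /phi eqxx. Qed.

Lemma phi_iso : order_iso_D phi.
Proof.
split.
- move=> x y [->|[q ->]] [->|[q' ->]]; rewrite ?phi0 ?phi_exp ?lexx //.
  + by rewrite (ltW (psi_gt0 _)) (ltW (expR_gt0 _)).
  + by rewrite !leNgt psi_gt0 expR_gt0.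
  + by rewrite psi_mono ler_expR !lerN2 ler_rat.
- move=> x [->|[q ->]]; rewrite ?phi0 ?phi_exp //; exact: ltW (psi_gt0 _).
- move=> q; rewrite le_eqVlt => /orP[/eqP <-|Hq].
    by exists 0; [left|rewrite phi0].
  have [s Hs] := psi_surj Hq.
  exists (expR (- ratr (- s))); first by right; exists (- s).
  by rewrite phi_exp opprK.
Qed.
End Phi.

Section Main.
Variable k : countFieldType.
Hypothesis kinf : forall s : seq k, exists x : k, x \notin s.

Lemma nz_def : ser_nz ([:: (0, 1)] : ser k).
Proof. by exists 0; rewrite /coef big_cons big_nil eqxx addr0 oner_neq0. Qed.

Definition a_def : kTQ k := exist _ (Frac [::] [:: (0, 1)]) nz_def.

Definition eX (n : nat) : kTQ k :=
  epsilon (inhabits a_def) (fun a => pickle (nu a, de a) = n).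

Lemma eX_surj a : exists n, eX n = a.
Proof.
exists (pickle (nu a, de a)).
have := epsilon_spec (inhabits a_def) (fun a' : kTQ k => pickle (nu a', de a') = pickle (nu a, de a))
  (ex_intro _ a erefl).
rewrite -/(eX _) => /(pcan_inj pickleK) [].
case: (eX _) => [[n1 d1] p1]; case: a => [[n2 d2] p2]; rewrite /nu /de /= => E1 E2.
subst; f_equal; apply: proof_irrelevance.
Qed.

Lemma list_min (T : Type) (f : T -> rat) (L : seq T) : L <> [::] ->
  exists p, List.In p L /\ forall p', List.In p' L -> f p <= f p'.
Proof.
elim: L => [//|a L IH] _.
case: L IH => [|b L] IH.
  by exists a; split; [left|move=> p' [<-|[]]].
have [p [Hp Hmin]] := IH ltac:(by []).
case: (leP (f a) (f p)) => H.
  exists a; split; first by left.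
  by move=> p' [<-|Hp']; [|apply: (le_trans H); apply: Hmin].
exists p; split; first by right.
by move=> p' [<-|Hp']; [apply: ltW|apply: Hmin].
Qed.

Variables (U : countType) (dU : U -> U -> rat).
Hypothesis hU : is_rational_Urysohn_ultrametric dU.

Lemma kTQ_back (L : seq (kTQ k * U)) : iso (@delta k) dU L -> forall u, exists a,
  forall p, List.In p L -> delta a p.1 = dU u p.2.
Proof.
move=> HL u.
have [[Uge0 Um0 Ums Umu] _ _] := hU.
case EL: L => [|p1 L']; first by exists a_def.
have HLn : L <> [::] by rewrite EL.
rewrite -EL; clear EL.
have [p0 [Hp0 Hmin]] := list_min (fun p => dU u p.2) HLn.
have [Hr0|Hrpos] := eqVneq (dU u p0.2) 0.
  move/Um0: Hr0 => ->; exists p0.1 => p Hp.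
  by rewrite (HL _ _ Hp0 Hp).
have Hr : 0 < dU u p0.2 by rewrite lt_neqAle eq_sym Hrpos Uge0.
have [s Hs] := psi_surj Hr.
have [a Ha] := back_step kinf p0.1 (- s) (map fst L).
exists a => p Hp.
have [HA HB] := Ha _ (List.in_map fst _ _ Hp).
rewrite opprK Hs in HA HB.
rewrite -(HL _ _ Hp0 Hp) in HA HB.
case: (ltP (dU u p0.2) (dU p0.2 p.2)) => Hc.
  rewrite HA //.
  apply/eqP; rewrite eq_le; apply/andP; split.
    have H := Umu p0.2 u p.2; rewrite [dU p0.2 u]Ums le_max in H.
    case/orP: H => // H; by move: (lt_le_trans Hc H); rewrite ltxx.
  by have := Umu u p0.2 p.2; rewrite (max_idPr (ltW Hc)).
rewrite HB //.
apply/eqP; rewrite eq_le Hmin //=.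
by have := Umu u p0.2 p.2; rewrite (max_idPl Hc).
Qed.

End Main.

Lemma phi_kdist (R : realType) (k : fieldType) (a b : kTQ k) :
  phi (kdist R a b) = delta a b.
Proof. rewrite /kdist /delta; case: frac_val => [q|]; [exact: phi_exp|exact: phi0]. Qed.

Unset Implicit Arguments.
Set Strict Implicit.

Theorem corollary3p33 (k : countFieldType)
  (k_infinite : forall s : seq k, exists x : k, x \notin s)
  (R : realType) (U : countType) (dU : U -> U -> rat)
  (hU : is_rational_Urysohn_ultrametric dU) :
  exists (phi : R -> rat) (F : kTQ k -> U),
    [/\ order_iso_D phi,
        (forall a b : kTQ k, dU (F a) (F b) = phi (kdist R a b)) &
        (forall u : U, exists a : kTQ k, F a = u)].
Proof.
have [[Uge0 Um0 Ums Umu] Uuniv Uhom] := hU.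
have Hm1 : rat_ultrametric (fun _ _ : 'I_1 => 0 : rat).
  split => //; first by move=> i j; split => // _; rewrite (ord1 i) (ord1 j).
have [e0 _] := Uuniv 1%N _ Hm1.
pose u0 := e0 ord0.
pose eY n := odflt u0 (unpickle n).
have eYs : forall y, exists n, eY n = y by move=> y; exists (pickle y); rewrite /eY pickleK.
have dY0 : forall x y, dU x y = 0 -> x = y by move=> x y /Um0.
have dYxx : forall x, dU x x = 0 by move=> x; apply/Um0.
have Hforth := U_forth (@delta_aa k) (@delta_sym k) (@delta_ge0 k) (@delta_ultra k) hU u0.
have Hback := kTQ_back k_infinite hU.
have [F [HF1 HF2]] := BF dY0 dYxx (@delta_aa k) Ums (@delta_sym k) (@eX_surj k) eYs Hforth Hback.
exists (@phi R), F; split.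
- exact: phi_iso.
- by move=> a b; rewrite phi_kdist.
- exact: HF2.
Qed.
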